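(* Let $\Gamma=\mathbb Q_{>0}$ be the multiplicative group of positive rationals, acting on the additive group $\mathbb Q$ (discrete) by $\widehat\rho(\gamma)(x)=\gamma x$, and let $\rho$ be the dual action of $\Gamma$ on the compact group $\widehat{\mathbb Q}$, i.e. $\rho(\gamma)(g)(x)=g(\gamma x)$ for $g\in\widehat{\mathbb Q}$, $x\in\mathbb Q$. Then $(\widehat{\mathbb Q},\rho)$ is expansive, but for no finitely generated subgroup $\Gamma_0\subset\Gamma$ is the restriction of $\rho$ to $\Gamma_0$ expansive.
   Context: $\widehat{\mathbb Q}$ is the Pontryagin dual of the discrete group $\mathbb Q$ (a one-dimensional solenoid). An action $\rho$ of $\Gamma$ on a metrizable topological group $X$ by continuous endomorphisms is expansive if there is a neighborhood $U$ of the identity with $\bigcap_{\gamma\in\Gamma}\rho(\gamma)^{-1}(U)=\{e\}$. *)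

(* Defs.v *)
From HB Require Import structures.
From mathcomp Require Import all_boot all_order all_algebra.
From mathcomp Require Import reals complex.
Set Implicit Arguments. Unset Strict Implicit. Unset Printing Implicit Defensive.
Import Order.TTheory GRing.Theory Num.Theory.
Local Open Scope ring_scope.

(* The circle group T is modelled as the unit complex numbers in R[i],
   for a real field R (realType).  The Pontryagin dual of the discrete
   group (Q,+) is the set of characters chi : rat -> R[i] with values in T
   that are additive-to-multiplicative homomorphisms.  Its topology is the
   compact-open topology, which (Q being discrete) is the topology of
   pointwise convergence. *)

Definition is_char (R : realType) (g : rat -> R[i]) : Prop :=
  (forall x, `|g x| = 1) /\ (forall x y, g (x + y) = g x * g y).

Definition char_one (R : realType) : rat -> R[i] := fun _ => 1.

Definition rho (R : realType) (gamma : rat) (g : rat -> R[i]) : rat -> R[i] :=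
  fun x => g (gamma * x).

Definition nbhd_one (R : realType) (U : (rat -> R[i]) -> Prop) : Prop :=
  exists (xs : seq rat) (eps : R), 0 < eps /\
    forall g, is_char g -> (forall x, x \in xs -> `|g x - 1| < (eps%:C)%C) -> U g.

Definition expansive_on (R : realType) (G : rat -> Prop) : Prop :=
  exists U : (rat -> R[i]) -> Prop, nbhd_one U /\
    forall g, is_char g ->
      ((forall gamma, G gamma -> U (rho gamma g)) <-> g = char_one R).

Definition gen_subgroup (gens : seq rat) : rat -> Prop :=
  fun gamma => exists ks : seq int, size ks = size gens /\
    gamma = \prod_(i < size gens) gens`_i ^ ks`_i.

Definition posQ : rat -> Prop := fun gamma => 0 < gamma.

(* Main.v *)
Require Import Defs.
From mathcomp Require Import all_boot all_order all_algebra.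
From mathcomp Require Import reals complex.
From mathcomp Require Import ring lra.
From mathcomp Require cyclic.
From Stdlib Require Import FunctionalExtensionality ClassicalEpsilon.
Import Order.TTheory GRing.Theory Num.Theory.
Set Implicit Arguments. Unset Strict Implicit. Unset Printing Implicit Defensive.
Local Open Scope ring_scope.
Section Part1.
Variable R : realType.
Local Notation C := R[i].

Lemma char0 (g : rat -> C) : is_char g -> g 0 = 1.
Proof.
move=> [Hn Hm]; have h := Hm 0 0; rewrite addr0 in h.
have g0 : g 0 != 0 by rewrite -normr_eq0 Hn oner_eq0.
by apply: (mulfI g0); rewrite mulr1 -h.
Qed.

Lemma charN (g : rat -> C) x : is_char g -> g (- x) * g x = 1.
Proof. by move=> hg; rewrite -hg.2 addNr char0. Qed.

Lemma charMn (g : rat -> C) x n : is_char g -> g (n%:R * x) = g x ^+ n.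
Proof.
move=> hg; elim: n => [|n IH]; first by rewrite mul0r expr0 char0.
by rewrite mulrSr mulrDl mul1r hg.2 IH exprSr.
Qed.

Lemma ReIm1 (u : C) : `|u| = 1 -> complex.Re u ^+ 2 + complex.Im u ^+ 2 = 1.
Proof.
by move=> h; apply: complexI; rewrite add_Re2_Im2 h expr1n.
Qed.

Lemma unit_sq (u : C) : `|u| = 1 ->
  complex.Re (u * u) = 2 * complex.Re u ^+ 2 - 1.
Proof.
move=> h; have := ReIm1 h; case: u {h} => a b /= h.
rewrite -!expr2; lra.
Qed.

Lemma dist1 (u : C) : `|u| = 1 -> `|u - 1| ^+ 2 = (2 - 2 * complex.Re u)%:C%C.
Proof.
move=> h; rewrite -add_Re2_Im2; congr (_%:C)%C.
have := ReIm1 h.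
have -> : complex.Re (u - 1) = complex.Re u - 1 by rewrite raddfB.
have -> : complex.Im (u - 1) = complex.Im u by rewrite raddfB /= subr0.
lra.
Qed.

Lemma no_small (w : C) : `|w| = 1 ->
  (forall n, `|w ^+ (2 ^ n) - 1| < ((1/2)%:C)%C) -> w = 1.
Proof.
move=> hw H.
pose r n := complex.Re (w ^+ (2 ^ n)).
have hn n : `|w ^+ (2 ^ n)| = 1 by rewrite normrX hw expr1n.
have hr n : 7/8 < r n.
  have h1 := H n; have h2 := dist1 (hn n).
  have : `|w ^+ (2 ^ n) - 1| ^+ 2 < ((1/2)%:C)%C ^+ 2.
    by rewrite ltrXn2r.
  rewrite h2 -rmorphXn ltcR /r; lra.
have hrec n : r n.+1 = 2 * r n ^+ 2 - 1.
  by rewrite /r expnSr exprM expr2 unit_sq.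
have hle n : r n <= 1.
  have := ReIm1 (hn n); rewrite -/(r n) => h.
  have : 0 <= complex.Im (w ^+ (2 ^ n)) ^+ 2 by rewrite sqr_ge0.
  nra.
have hgrow n : 3 ^+ n * (1 - r 0) <= 1 - r n.
  elim: n => [|n IH]; first by rewrite expr0 mul1r.
  rewrite hrec exprS -mulrA.
  have := hr n; have := hle n; nra.
have hd0 : 1 - r 0 = 0.
  apply/eqP; rewrite eq_le; apply/andP; split; last by rewrite subr_ge0 hle.
  rewrite leNgt; apply/negP => hpos.
  have hx : 0 <= 1 / (8 * (1 - r 0)) by rewrite divr_ge0 // mulr_ge0 // ltW.
  have := archi_boundP hx; set N := Num.Def.archi_bound _ => hN.
  have h3 : (N%:R : R) <= 3 ^+ N.
    by rewrite -natrX ler_nat ltnW // ltn_expl.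
  have := hgrow N; have := hr N.
  have : 1 < N%:R * (8 * (1 - r 0)).
    by rewrite -ltr_pdivrMr ?mulr_gt0 // mul1r.
  nra.
have hRe : complex.Re w = 1 by move: hd0; rewrite /r expn0 expr1; lra.
have := ReIm1 hw; rewrite hRe expr1n => h.
have hIm : complex.Im w = 0.
  by apply/eqP; rewrite -sqrf_eq0; apply/eqP; lra.
by case: w hRe hIm {hw H r hn hr hrec hle hgrow hd0 h} => a b /= -> ->.
Qed.

Theorem part1 : expansive_on R posQ.
Proof.
exists (fun g => `|g 1 - 1| < ((1/2)%:C)%C); split.
  exists [:: 1], (1/2); split; first lra.
  by move=> g _ /(_ 1); rewrite mem_seq1 eqxx => /(_ isT).
move=> g hg; split; last first.
  move=> -> gam _; rewrite /rho /char_one subrr normr0 ltcR; lra.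
move=> H; apply: functional_extensionality => x; rewrite /char_one.
have pos y : 0 < y -> g y = 1.
  move=> hy; apply: no_small; first exact: hg.1.
  move=> n; have := H ((2 ^ n)%:R * y).
  rewrite /rho mulr1 charMn //; apply.
  by rewrite /posQ mulr_gt0 // ltr0n expn_gt0.
case: (ltrgtP x 0) => hx.
- by have := charN x hg; rewrite pos ?oppr_gt0 // mul1r.
- exact: pos.
- by rewrite hx char0.
Qed.
End Part1.
Section Part2.
Variable R : realType.
Local Notation C := R[i].
Variable q : nat.
Hypothesis hq : prime q.

Definition Qp n := (q ^ logn q n`!)%N.

Lemma Qp_gt0 n : (0 < Qp n)%N.
Proof. by rewrite expn_gt0 prime_gt0. Qed.

Lemma root_ex (n : nat) (w : C) : exists v : C, v ^+ n.+1 = w.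
Proof.
have [v hv] := @solve_monicpoly C n.+1 (fun i => if i == 0%N then w else 0) isT.
exists v; rewrite hv big_ord_recl /= expr0 mulr1 big1 ?addr0 // => i _.
by rewrite mul0r.
Qed.

Lemma gen_ex n (w : C) : w ^+ Qp n = 1 ->
  exists v : C, v ^+ n.+1 = w /\ v ^+ Qp n.+1 = 1.
Proof.
move=> hw.
set K := Qp n.+1; set E := ((n.+1)`_q)%N; set c := ((n.+1)`_q^')%N.
have hK : K = (E * Qp n)%N.
  by rewrite /K /Qp factS lognM ?fact_gt0 // expnD /E p_part.
have hnc : (E * c)%N = n.+1 by rewrite /E /c partnC.
have hcq : coprime c K.
  rewrite /K /Qp coprimeXr // coprime_sym prime_coprime //.
  by rewrite -p'natE // part_pnat.
have [w0 hw0] := root_ex n w.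
set T := (c ^ totient K)%N.
have hT : T = 1 %[mod K] by apply: cyclic.Euler_exp_totient.
have hphi : (0 < totient K)%N by rewrite totient_gt0 Qp_gt0.
exists (w0 ^+ T); split.
  rewrite -exprM mulnC exprM hw0 -(expr_mod _ hw).
  have hdv : (Qp n %| K)%N by rewrite hK dvdn_mull.
  by rewrite -(modn_dvdm _ hdv) hT (modn_dvdm _ hdv) expr_mod // expr1.
rewrite -exprM.
have -> : (T * K = (c ^ (totient K).-1) * (n.+1 * Qp n))%N.
  by rewrite -hnc /T -{1}(prednK hphi) expnSr hK; ring.
by rewrite mulnC exprM exprM hw0 hw expr1n.
Qed.

Lemma zeta_ex : exists zeta : C, zeta ^+ q = 1 /\ zeta ^+ (q.-1)`! != 1.
Proof.
have hq1 : (1 < q)%N by rewrite prime_gt1.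
have hq0 : (0 < q.-1)%N by rewrite -ltnS prednK // ltnW.
have [z hz] := @solve_monicpoly C q.-1 (fun _ => -1) hq0.
have hs : \sum_(i < q) z ^+ i = 0.
  rewrite -(prednK (ltnW hq1)) big_ord_recr /= hz -big_split /=.
  by rewrite big1 // => i _; rewrite mulN1r subrr.
have hzq : z ^+ q = 1 by apply/eqP; rewrite -subr_eq0 subrX1 hs mulr0.
exists z; split => //; apply/negP => /eqP hf.
have hcop : coprime (q.-1)`! q.
  rewrite coprime_sym prime_coprime //; apply/negP => hd.
  have := (Wilson hq1); rewrite hq => /esym.
  by rewrite -addn1 dvdn_addr // dvdn1 => /eqP hq'; move: hq1; rewrite hq'.
have [a _ ha] := Bezoutl q (fact_gt0 q.-1).
move: ha; rewrite (eqP hcop) => /dvdnP [s hs'].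
have hz1 : z = 1.
  have e : z ^+ (1 + a * q) = z ^+ (s * (q.-1)`!) by rewrite hs'.
  by move: e; rewrite exprD (mulnC a q) exprM hzq expr1n mulr1 expr1 (mulnC s) exprM hf expr1n.
move: hs; rewrite hz1 (eq_bigr (fun _ => 1)) => [|i _]; last by rewrite expr1n.
by rewrite sumr_const card_ord => /eqP; rewrite pnatr_eq0 => /eqP hq0'; move: hq1; rewrite hq0'.
Qed.

Definition stepP n (w v : C) :=
  v ^+ n.+1 = w /\ v ^+ Qp n.+1 = 1 /\ (n.+1 = q -> v ^+ (q.-1)`! != 1).

Lemma step_ex n (w : C) : w ^+ Qp n = 1 -> exists v, stepP n w v.
Proof.
move=> hw; have [v [hv1 hv2]] := gen_ex hw.
case: (eqVneq n.+1 q) => hnq; last by exists v; split; [|split] => // e; move: hnq; rewrite e eqxx.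
have [zt [hz1 hz2]] := zeta_ex.
have hqK : (q %| Qp n.+1)%N.
  have hl : (0 < logn q q`!)%N.
    rewrite logn_gt0 mem_primes hq fact_gt0 /=. by apply: dvdn_fact; rewrite prime_gt0 // leqnn.
  by rewrite /Qp hnq -(prednK hl) expnS dvdn_mulr.
have [k hk] := dvdnP hqK.
case: (eqVneq (v ^+ (q.-1)`!) 1) => hv; last by exists v; split; [|split].
have hz1' : zt ^+ n.+1 = 1 by rewrite hnq.
exists (v * zt); split; first by rewrite exprMn hv1 hz1' mulr1.
split; first by rewrite exprMn hv2 hk mulnC exprM hz1 expr1n mulr1.
by move=> _; rewrite exprMn hv mul1r.
Qed.

Definition step n (w : C) : C := epsilon (inhabits 0) (stepP n w).

Fixpoint zz n : C := if n is m.+1 then step m (zz m) else 1.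

Lemma zzQ n : zz n ^+ Qp n = 1 /\ stepP n (zz n) (zz n.+1).
Proof.
elim: n => [|n [IH1 IH2]].
  have h0 : zz 0 ^+ Qp 0 = 1 by rewrite /= expr1n.
  split => //; exact: (epsilon_spec (inhabits 0) (stepP 0 (zz 0)) (step_ex h0)).
have h1 : zz n.+1 ^+ Qp n.+1 = 1 by case: IH2 => _ [].
split => //; exact: (epsilon_spec (inhabits 0) (stepP n.+1 (zz n.+1)) (step_ex h1)).
Qed.

Lemma zzS n : zz n = zz n.+1 ^+ n.+1.
Proof. by case: (zzQ n) => _ [<-]. Qed.

Lemma zzq : zz q ^+ (q.-1)`! != 1.
Proof.
have hq0 := prime_gt0 hq.
case: (zzQ q.-1) => _ [_ [_]]; rewrite prednK //; apply; done.
Qed.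

Lemma zz_neq0 n : zz n != 0.
Proof.
apply/negP => /eqP h; have := (zzQ n).1; rewrite h expr0n.
by rewrite eqn0Ngt Qp_gt0 /= => /eqP; rewrite eq_sym oner_eq0.
Qed.

Lemma zz_norm n : `|zz n| = 1.
Proof.
have := (zzQ n).1 => /(congr1 (fun x => `|x|)); rewrite normrX normr1 => /eqP.
by rewrite pexpr_eq1 ?Qp_gt0 // => /eqP.
Qed.

Lemma fact_dvd m M : (m <= M)%N -> (m`! %| M`!)%N.
Proof.
elim: M => [|M IH]; first by rewrite leqn0 => /eqP ->.
rewrite leq_eqVlt => /orP [/eqP -> //|]; rewrite ltnS => /IH h.
by rewrite factS dvdn_mull.
Qed.

Lemma zz_shift m M : (m <= M)%N -> zz m = zz M ^+ (M`! %/ m`!).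
Proof.
elim: M => [|M IH]; first by rewrite leqn0 => /eqP ->; rewrite divnn fact_gt0 expr1.
rewrite leq_eqVlt => /orP [/eqP ->|]; first by rewrite divnn fact_gt0 expr1.
rewrite ltnS => hm; rewrite (IH hm) zzS -exprM; congr (_ ^+ _).
by rewrite factS muln_divA // fact_dvd.
Qed.

Definition dn (y : rat) : nat := `|denq y|%N.

Lemma dn_gt0 y : (0 < dn y)%N.
Proof. by rewrite /dn absz_gt0 denq_neq0. Qed.

Lemma ratE y : y = (numq y)%:~R / (dn y)%:R.
Proof.
rewrite -[X in X = _]divq_num_den; congr (_ / _).
by rewrite /dn -{1}(gtz0_abs (denq_gt0 y)).
Qed.

Definition G (y : rat) : C := zz (dn y) ^ (numq y * ((dn y)`! %/ dn y)%N%:Z).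

Lemma shift2 (a : int) b m M : (0 < b)%N -> (b <= m)%N -> (m <= M)%N ->
  zz m ^ (a * (m`! %/ b)%N%:Z) = zz M ^ (a * (M`! %/ b)%N%:Z).
Proof.
move=> hb hbm hmM; rewrite (zz_shift hmM) exprnP exprz_exp; congr (_ ^ _).
have hn : ((M`! %/ m`!) * (m`! %/ b))%N = (M`! %/ b)%N.
  by rewrite muln_divA ?dvdn_fact ?hb // divnK // fact_dvd.
by rewrite mulrCA -PoszM hn.
Qed.

Lemma eq_int_ratio (n a : int) (d b : nat) : (0 < d)%N -> (0 < b)%N ->
  (n%:~R / d%:R = a%:~R / b%:R :> rat) -> n * b%:Z = a * d%:Z.
Proof.
move=> hd hb /eqP; rewrite eqr_div ?pnatr_eq0 -?lt0n // => /eqP h.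
by apply: (@intr_inj rat); rewrite !intrM.
Qed.

Lemma Rep (a : int) (b m : nat) : (0 < b)%N -> (b <= m)%N ->
  G (a%:~R / b%:R) = zz m ^ (a * (m`! %/ b)%N%:Z).
Proof.
move=> hb hbm; set y := a%:~R / b%:R.
set M := maxn m (dn y).
have hdM : (dn y <= M)%N by rewrite /M leq_max leqnn orbT.
have hmM : (m <= M)%N by rewrite /M leq_max leqnn.
have hbM : (b <= M)%N by rewrite (leq_trans hbm).
rewrite /G (shift2 _ (dn_gt0 y) (leqnn _) hdM).
rewrite (shift2 _ hb hbm hmM); congr (_ ^ _).
have he : numq y * b%:Z = a * (dn y)%:Z.
  by apply: eq_int_ratio (dn_gt0 y) hb _; rewrite -ratE.
have hP : ((M`! %/ dn y)%N%:Z * (dn y)%:Z) = (M`!)%:Z.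
  by rewrite -PoszM divnK // dvdn_fact // dn_gt0.
have hQ : ((M`! %/ b)%N%:Z * b%:Z) = (M`!)%:Z.
  by rewrite -PoszM divnK // dvdn_fact // hb.
have hnz : (dn y)%:Z * b%:Z != 0 by rewrite mulf_eq0 negb_or !eqz_nat -!lt0n dn_gt0 hb.
apply: (mulIf hnz).
transitivity ((numq y * b%:Z) * ((M`! %/ dn y)%N%:Z * (dn y)%:Z)); first by ring.
rewrite he hP -hQ; ring.
Qed.

Lemma G_add x y : G (x + y) = G x * G y.
Proof.
have hx := dn_gt0 x; have hy := dn_gt0 y.
set M := (dn x * dn y)%N.
have hM : (0 < M)%N by rewrite muln_gt0 hx hy.
have exy : x + y = (numq x * (dn y)%:Z + numq y * (dn x)%:Z)%:~R / M%:R.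
  rewrite {1}(ratE x) {1}(ratE y) addf_div ?pnatr_eq0 -?lt0n //.
  by rewrite rmorphD !rmorphM /= ?natrM.
have Gx : G x = zz M ^ (numq x * (M`! %/ dn x)%N%:Z).
  by rewrite {1}(ratE x) (@Rep _ _ M hx) // /M leq_pmulr.
have Gy : G y = zz M ^ (numq y * (M`! %/ dn y)%N%:Z).
  by rewrite {1}(ratE y) (@Rep _ _ M hy) // /M leq_pmull.
have hu : zz M \is a GRing.unit by rewrite unitfE zz_neq0.
rewrite Gx Gy exy (Rep _ hM (leqnn M)) -(exprzDr hu).
congr (_ ^ _).
have hK : ((M`! %/ M) * M)%N = M`!.
  by apply: divnK; apply: dvdn_fact; rewrite hM leqnn.
have e1 : (M`! %/ dn x)%N = ((M`! %/ M) * dn y)%N.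
  by rewrite -{1}hK /M (mulnC (dn x)) mulnA mulnK.
have e2 : (M`! %/ dn y)%N = ((M`! %/ M) * dn x)%N.
  by rewrite -{1}hK /M mulnA mulnK.
rewrite e1 e2 !PoszM; ring.
Qed.

Lemma normz (n : nat) (k : int) : `|zz n ^ k| = 1.
Proof.
case: k => k; first by rewrite -exprnP normrX zz_norm expr1n.
by rewrite NegzE -invr_expz normfV -exprnP normrX zz_norm expr1n invr1.
Qed.

Lemma G_char : is_char G.
Proof. by split => [x|x y]; [exact: normz | exact: G_add]. Qed.

Lemma G_triv (c : int) e : (0 < e)%N -> ~~ (q %| e)%N -> G (c%:~R / e%:R) = 1.
Proof.
move=> he hqe; rewrite (Rep _ he (leqnn e)).
have h1 : zz e ^+ (e`! %/ e) = 1.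
  have [Q1 hQ1] : exists Q1, (e`! %/ e = Q1 * Qp e)%N.
    apply/(@dvdnP (Qp e)); rewrite -(prednK he) factS mulKn //.
    rewrite /Qp factS lognM ?fact_gt0 //.
    rewrite logn_coprime ?add0n ?pfactor_dvdnn //.
    by rewrite prime_coprime // prednK.
  by rewrite hQ1 mulnC exprM (zzQ e).1 expr1n.
by rewrite mulrC -exprz_exp -exprnP h1 exp1rz.
Qed.

Lemma G_nontriv : G (1 / q%:R) != 1.
Proof.
have hq0 := prime_gt0 hq.
have := Rep 1 hq0 (leqnn q); rewrite mul1r => ->.
by rewrite -(prednK hq0) factS mulKn // -exprnP prednK //; exact: zzq.
Qed.

End Part2.
Section Final.
Variable R : realType.

Lemma sum_ge (T : eqType) (f : T -> nat) s x : x \in s -> (f x <= \sum_(y <- s) f y)%N.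
Proof.
elim: s => [//|a s IH]; rewrite in_cons big_cons => /orP [/eqP ->|/IH h].
  exact: leq_addr.
exact: leq_trans h (leq_addl _ _).
Qed.

Section V.
Variable q : nat.
Hypothesis hq : prime q.
Definition V (y : rat) := exists a b : nat,
  [&& (0 < a)%N, (0 < b)%N, ~~ (q %| a)%N & ~~ (q %| b)%N] /\ y = a%:R / b%:R.

Lemma V1 : V 1.
Proof.
exists 1%N, 1%N; rewrite divr1; split => //.
by rewrite dvdn1 -[q == 1%N]negbK neq_ltn prime_gt1 ?orbT.
Qed.

Lemma VM y z : V y -> V z -> V (y * z).
Proof.
move=> [a [b [/and4P [a0 b0 qa qb] ->]]] [c [d [/and4P [c0 d0 qc qd] ->]]].
exists (a * c)%N, (b * d)%N; rewrite mulf_div -!natrM; split => //.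
by rewrite !muln_gt0 a0 b0 c0 d0 !Euclid_dvdM // !negb_or qa qb qc qd.
Qed.

Lemma VV y : V y -> V y^-1.
Proof.
move=> [a [b [/and4P [a0 b0 qa qb] ->]]]; exists b, a; rewrite invf_div.
by split => //; rewrite a0 b0 qa qb.
Qed.

Lemma VX y (k : int) : V y -> V (y ^ k).
Proof.
move=> hy.
have hn n : V (y ^+ n).
  by elim: n => [|n IH]; [rewrite expr0; exact: V1 | rewrite exprS; exact: VM].
case: k => n; first by rewrite -exprnP.
by rewrite NegzE -invr_expz -exprnP; apply: VV.
Qed.
End V.

Theorem part2 (gens : seq rat) : all (fun q => 0 < q) gens ->
  ~ expansive_on R (gen_subgroup gens).
Proof.
move=> /allP hpos [U [[xs [eps [heps HU]]] Hiff]].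
set B := (\sum_(x <- xs) dn x + \sum_(y <- gens) (`|numq y| + dn y))%N.
have [q hBq hq] := prime_above B.
have hqd x : x \in xs -> ~~ (q %| dn x)%N.
  move=> hx; rewrite gtnNdvd ?dn_gt0 //; apply: leq_ltn_trans hBq.
  exact: leq_trans (sum_ge dn hx) (leq_addr _ _).
have hgen y : y \in gens -> V q y.
  move=> hy; have y0 := hpos y hy.
  have hle : (`|numq y| + dn y <= B)%N.
    exact: leq_trans (sum_ge (fun y => `|numq y| + dn y)%N hy) (leq_addl _ _).
  have n0 : (0 < `|numq y|)%N by rewrite absz_gt0 numq_eq0 gt_eqF.
  exists `|numq y|%N, (dn y); split.
    rewrite n0 dn_gt0 !gtnNdvd ?dn_gt0 //.
      exact: leq_ltn_trans (leq_addl _ _) (leq_ltn_trans hle hBq).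
    exact: leq_ltn_trans (leq_addr _ _) (leq_ltn_trans hle hBq).
  rewrite {1}(ratE y); congr (_ / _).
  have e : Posz `|numq y|%N = numq y by rewrite gtz0_abs // numq_gt0.
  by rewrite -[in LHS]e.
have hV gam : gen_subgroup gens gam -> V q gam.
  move=> [ks [_ ->]]; apply: (big_ind (V q)); [exact: (V1 hq) | exact: VM |].
  move=> i _; apply: (VX hq); apply: hgen; exact: mem_nth.
have hrho gam : gen_subgroup gens gam -> U (rho gam (G R q)).
  move=> hg; apply: HU.
    split => [x|x y]; first exact: (G_char R hq).1.
    by rewrite /rho mulrDr (G_char R hq).2.
  move=> x hx; rewrite /rho.
  have [a [b [/and4P [a0 b0 qa qb] ->]]] := hV _ hg.
  rewrite {1}(ratE x) mulf_div -natrM.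
  have -> : (a%:R * (numq x)%:~R : rat) = ((a%:Z * numq x)%:~R) by rewrite intrM.
  rewrite (G_triv R hq) //; last by rewrite Euclid_dvdM // negb_or qb hqd.
    by rewrite subrr normr0 ltcR.
  by rewrite muln_gt0 b0 dn_gt0.
have hG1 := (Hiff (G R q) (G_char R hq)).1 hrho.
by have := G_nontriv R hq; rewrite hG1 /char_one eqxx.
Qed.
End Final.

Theorem mainTheorem18 (R : realType) :
  expansive_on R posQ /\
  (forall gens : seq rat, all (fun q => 0 < q) gens ->
     ~ expansive_on R (gen_subgroup gens)).
Proof. split; [exact: part1 | exact: part2]. Qed.
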